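(* Let $d\ge0$ and $\alpha_{d+1}>0$. For the Gaussian broadcast model on $P=\mathcal{HS}_{d+1}$, local reconstruction is possible if and only if single-vertex reconstruction is possible.
   Context: Gaussian broadcast model: Let $d\ge 0$ and let $P$ be an infinite graded poset with layers $L_0,L_1,\dots$ ($L_t$ = elements of rank $t$, $L_0$ = minimal elements), in which every element covers at most $d+1$ elements. For $v\in P$ let $\mathfrak p(v)$ be the set of elements covered by $v$. Given $\alpha_1,\dots,\alpha_{d+1}>0$, let $X_0\sim\mathcal N(0,1)$ and, independently, let $W_{u\to v}$ be i.i.d. $\mathcal N(0,1)$ indexed by covering pairs $u\lessdot v$. Set $X_v=X_0$ for $v\in L_0$, and for $v$ of rank $\ge1$ set $X_v=\alpha_{|\mathfrak p(v)|}\sum_{u\in\mathfrak p(v)}(X_u+W_{u\to v})$. Infinite model: $\mathcal{HS}_{d+1}=\{(x_1,\dots,x_{d+1})\in\mathbb Z^{d+1}: x_1+\dots+x_{d+1}\ge0\}$ with $u\le v$ iff $v-u\in\mathbb Z_{\ge0}^{d+1}$; $L_t$ is the set of points with coordinate sum $t$; every element of rank $\ge1$ covers exactly $d+1$ elements. A window of width $N$ is a set $\big([x_1,x_1+N)\times\cdots\times[x_{d+1},x_{d+1}+N)\big)\cap P$ with $x_i\in\mathbb Z$. Local reconstruction is possible if there exist a finite $N$, windows $\mathcal W_t$ ($t\ge0$) of width $N$, and $c:P\to\mathbb R$ with $c|_{L_t}$ supported on $\mathcal W_t$, such that $\zeta_t:=\sum_{u\in L_t}c_uX_u$ satisfies $\operatorname{Var}(\zeta_t)>0$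 for all $t$ and $\operatorname{corr}(\zeta_t,X_0)$ does not converge to $0$ as $t\to\infty$. Single-vertex reconstruction is possible if this can be done with $N=1$. *)

(* Defs.v *)
From HB Require Import structures.
From mathcomp Require Import all_boot all_order all_algebra.
From mathcomp Require Import all_classical all_reals all_analysis.
Set Implicit Arguments. Unset Strict Implicit. Unset Printing Implicit Defensive.
Import Order.TTheory GRing.Theory Num.Theory numFieldNormedType.Exports.
Local Open Scope ring_scope.
Local Open Scope classical_set_scope.

Definition pt (d : nat) := {ffun 'I_d.+1 -> int}.

Definition rank d (x : pt d) : int := \sum_(i < d.+1) x i.

Definition inHS d (x : pt d) : Prop := 0 <= rank x.

(* v - e_i : the elements covered by v (rank v >= 1) are exactly the v - e_i. *)
Definition down d (v : pt d) (i : 'I_d.+1) : pt d :=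
  [ffun j => v j - (j == i)%:Z].

(* Sources of randomness of the Gaussian broadcast model:
   None        ~ X_0,
   Some (v,i)  ~ W_{(v - e_i) -> v}, the noise on the covering pair v-e_i <. v. *)
Definition src d := option (pt d * 'I_d.+1)%type.

(* A centred jointly Gaussian variable that is a (finite) linear combination of
   the independent standard normals X_0, W_e is represented by its coefficient
   vector f : src d -> R (Gaussian Hilbert space). *)
Definition cov {R : realType} d (f g : src d -> R) : R :=
  (\sum_(s \in [set: src d]) f s * g s)%R.
Definition var {R : realType} d (f : src d -> R) : R := cov f f.
Definition corr {R : realType} d (f g : src d -> R) : R :=
  cov f g / Num.sqrt (var f * var g).

Definition X0 {R : realType} d : src d -> R :=
  fun s => if s is None then 1 else 0.
Definition Wn {R : realType} d (v : pt d) (i : 'I_d.+1) : src d -> R :=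
  fun s => if s == Some (v, i) then 1 else 0.

(* X_v for v of rank n, by recursion on the rank: X_v = X_0 on L_0 and
   X_v = alpha_{|p(v)|} * sum_{u in p(v)} (X_u + W_{u->v}); in HS_{d+1}
   |p(v)| = d+1 for every v of rank >= 1. *)
Fixpoint Xn {R : realType} d (alpha : nat -> R) (n : nat) (v : pt d)
  : src d -> R :=
  match n with
  | 0 => @X0 R d
  | n'.+1 => fun s => alpha d.+1 *
      \sum_(i < d.+1) (@Xn R d alpha n' (down v i) s + Wn v i s)
  end.

Definition Xv {R : realType} d (alpha : nat -> R) (v : pt d) : src d -> R :=
  Xn alpha `|rank v|%N v.

Definition inWindow d (N : nat) (x : pt d) (u : pt d) : Prop :=
  inHS u /\ forall i, x i <= u i < x i + N%:Z.

Definition layer d (t : nat) : set (pt d) := [set u | rank u = t%:Z].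

Definition zeta {R : realType} d (alpha : nat -> R) (c : pt d -> R) (t : nat)
  : src d -> R :=
  fun s => (\sum_(u \in @layer d t) c u * Xv alpha u s)%R.

Definition reconstruct_width {R : realType} d (alpha : nat -> R) (N : nat) : Prop :=
  exists (W : nat -> pt d) (c : pt d -> R),
    (forall t u, @layer d t u -> ~ inWindow N (W t) u -> c u = 0) /\
    (forall t, 0 < var (zeta alpha c t)) /\
    ~ ((fun t => corr (zeta alpha c t) (@X0 R d)) @ \oo --> (0 : R)).

Definition local_reconstruction {R : realType} d (alpha : nat -> R) : Prop :=
  exists N : nat, @reconstruct_width R d alpha N.

Definition single_vertex_reconstruction {R : realType} d (alpha : nat -> R) : Prop :=
  @reconstruct_width R d alpha 1.

(* Main.v *)
Require Import Defs.
From HB Require Import structures.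
From mathcomp Require Import all_boot all_order all_algebra.
From mathcomp Require Import all_classical all_reals all_analysis.
From mathcomp Require Import ring lra zify.
Import Order.TTheory GRing.Theory Num.Theory numFieldNormedType.Exports.
Set Implicit Arguments. Unset Strict Implicit. Unset Printing Implicit Defensive.
Local Open Scope ring_scope.

Lemma rank_down d (v : pt d) i : rank (Defs.down v i) = rank v - 1.
Proof.
rewrite /rank /Defs.down; under eq_bigr do rewrite ffunE.
rewrite sumrB; congr (_ - _).
by rewrite (bigD1 i) //= eqxx big1 ?addr0 // => j /negbTE ->.
Qed.

Lemma Xn_None (R : realType) d (alpha : nat -> R) n (v : pt d) :
  Xn alpha n v None = (alpha d.+1 * d.+1%:R) ^+ n.
Proof.
elim: n v => [|n IH] v /=; first by rewrite expr0.
rewrite /Wn; under eq_bigr do rewrite IH /= addr0.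
by rewrite sumr_const card_ord -mulr_natr exprS; ring.
Qed.

Lemma Xn_Wlow (R : realType) d (alpha : nat -> R) n (w v : pt d) i :
  rank w < rank v -> Xn alpha n w (Some (v, i)) = 0.
Proof.
elim: n w => [|n IH] w //= hwv.
rewrite big1 ?mulr0 // => j _.
rewrite IH; last by rewrite rank_down; apply: lt_trans hwv; rewrite ltrBlDr ltrDl.
rewrite /Wn; case: eqP => [[ev _]|]; last by rewrite addr0.
by move: hwv; rewrite ev ltxx.
Qed.

Fixpoint suppX d (n : nat) (v : pt d) : seq (src d) :=
  match n with
  | 0 => [:: None]
  | n'.+1 => None :: flatten [seq Some (v, i) :: suppX n' (Defs.down v i) | i <- enum 'I_d.+1]
  end.

Lemma Xn_supp (R : realType) d (alpha : nat -> R) n (v : pt d) s :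
  s \notin suppX n v -> Xn alpha n v s = 0.
Proof.
elim: n v => [|n IH] v /=.
  by case: s => // -[]; rewrite inE.
rewrite inE negb_or => /andP[_ hs].
rewrite big1 ?mulr0 // => i _.
have hi : s \notin Some (v, i) :: suppX n (Defs.down v i).
  apply: contra hs => h; apply/flatten_mapP; exists i => //; by rewrite mem_enum.
rewrite inE negb_or in hi; case/andP: hi => h1 h2.
by rewrite IH // /Wn (negbTE h1) addr0.
Qed.

Lemma fsumT_seq (R : realType) (T : choiceType) (r : seq T) (F : T -> R) :
  uniq r -> (forall s, s \notin r -> F s = 0) ->
  \sum_(s \in [set: T]) F s = \sum_(s <- r) F s.
Proof.
move=> ur F0; rewrite [RHS]fsbig_seq // (fsbig_widen [set` r] [set: T] F) //.
by move=> s [_ /= hs]; apply: F0; apply/negP.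
Qed.

Lemma covE (R : realType) d (r : seq (src d)) (f g : src d -> R) :
  uniq r -> (forall s, s \notin r -> f s = 0) ->
  cov f g = \sum_(s <- r) f s * g s.
Proof. by move=> ur h; rewrite /cov (fsumT_seq ur) // => s /h ->; rewrite mul0r. Qed.

Lemma covC (R : realType) d (f g : src d -> R) : cov f g = cov g f.
Proof.
by rewrite /cov; apply: eq_fsbigr => s _; rewrite mulrC.
Qed.

Lemma cov_W (R : realType) d (v : pt d) i (f : src d -> R) :
  cov (Wn v i) f = f (Some (v, i)).
Proof.
rewrite (@covE _ _ [:: Some (v, i)]) // ?big_seq1 /Wn ?eqxx ?mul1r //.
by move=> s; rewrite inE => /negbTE ->.
Qed.

Lemma cov_X0 (R : realType) d (f : src d -> R) : cov (@X0 R d) f = f None.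
Proof.
rewrite (@covE _ _ [:: None]) // ?big_seq1 /X0 ?mul1r //.
by case=> //; rewrite inE.
Qed.

Lemma suppX_down d n (u : pt d) i s :
  s \in suppX n (Defs.down u i) -> s \in suppX n.+1 u.
Proof.
move=> h; rewrite /= inE; apply/orP; right; apply/flatten_mapP.
by exists i; rewrite ?mem_enum // inE h orbT.
Qed.

Lemma suppX_W d n (u : pt d) i : Some (u, i) \in suppX n.+1 u.
Proof.
rewrite /= inE; apply/orP; right; apply/flatten_mapP.
by exists i; rewrite ?mem_enum // inE eqxx.
Qed.

Lemma cov_XnS (R : realType) d (alpha : nat -> R) n (u : pt d) (g : src d -> R) :
  cov (Xn alpha n.+1 u) g = alpha d.+1 *
    \sum_(i < d.+1) (cov (Xn alpha n (Defs.down u i)) g + cov (Wn u i) g).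
Proof.
set r := undup (suppX n.+1 u).
have ur : uniq r by apply: undup_uniq.
rewrite (covE _ ur); last by move=> s; rewrite mem_undup => /Xn_supp ->.
under eq_bigr do rewrite /= -mulrA mulr_suml.
rewrite -mulr_sumr exchange_big /=; congr (_ * _); apply: eq_bigr => i _.
rewrite (covE _ ur); last first.
  move=> s; rewrite mem_undup => hs; apply: Xn_supp; apply: contra hs.
  exact: suppX_down.
rewrite (covE _ ur); last first.
  move=> s hs; rewrite /Wn; case: eqP => // es; move: hs.
  by rewrite mem_undup es suppX_W.
by rewrite -big_split; apply: eq_bigr => s _; rewrite mulrDl.
Qed.

Fixpoint G (R : realType) d (k : nat) (u u' : pt d) : R :=
  match k with
  | 0 => (u == u')%:R
  | k'.+1 => \sum_(i < d.+1) \sum_(j < d.+1) G R k' (Defs.down u i) (Defs.down u' j)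
  end.

Lemma G_sym (R : realType) d k (u u' : pt d) : G R k u u' = G R k u' u.
Proof.
elim: k u u' => [|k IH] u u' /=; first by rewrite eq_sym.
rewrite exchange_big /=; apply: eq_bigr => i _; apply: eq_bigr => j _; exact: IH.
Qed.

Lemma sum_Wn (R : realType) d (u u' : pt d) i :
  \sum_(j < d.+1) Wn u' j (Some (u, i)) = (u == u')%:R :> R.
Proof.
rewrite /Wn; have [<-|neq] := eqVneq u u'.
  rewrite (bigD1 i) //= eqxx big1 ?addr0 // => j /negbTE nij.
  by case: eqP => // -[] /eqP; rewrite eq_sym nij.
by rewrite big1 // => j _; case: eqP => // -[] /eqP; rewrite (negbTE neq).
Qed.

Lemma cov_Xn (R : realType) d (alpha : nat -> R) n (u u' : pt d) :
  rank u = rank u' ->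
  cov (Xn alpha n u) (Xn alpha n u') =
  ((alpha d.+1 * d.+1%:R) ^+ 2) ^+ n +
  d.+1%:R * \sum_(k < n) (alpha d.+1 ^+ 2) ^+ k.+1 * G R k u u'.
Proof.
set a := alpha d.+1.
elim: n u u' => [|n IH] u u' hr.
  by rewrite big_ord0 mulr0 addr0 expr0 /= cov_X0.
have E1 : forall i, cov (Wn u i) (Xn alpha n.+1 u') = a * (u == u')%:R.
  move=> i; rewrite cov_W /=; congr (_ * _).
  rewrite (eq_bigr (fun j => Wn u' j (Some (u, i)))) ?sum_Wn // => j _.
  by rewrite Xn_Wlow ?add0r // rank_down hr ltrBlDr ltrDl.
have E2 : forall i, cov (Xn alpha n (Defs.down u i)) (Xn alpha n.+1 u') =
    a * \sum_(j < d.+1) (((a * d.+1%:R) ^+ 2) ^+ n + d.+1%:R *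
      \sum_(k < n) (a ^+ 2) ^+ k.+1 * G R k (Defs.down u' j) (Defs.down u i)).
  move=> i; rewrite covC cov_XnS; congr (_ * _); apply: eq_bigr => j _.
  rewrite cov_W Xn_Wlow ?addr0; first by rewrite IH // !rank_down hr.
  by rewrite rank_down -hr ltrBlDr ltrDl.
rewrite cov_XnS; under eq_bigr do rewrite E1 E2.
rewrite big_split /= -!mulr_sumr.
set Bn := (a * d.+1%:R) ^+ 2 ^+ n.
have S1 : \sum_(i < d.+1) \sum_(j < d.+1) (Bn + d.+1%:R *
          \sum_(k < n) a ^+ 2 ^+ k.+1 * G R k (Defs.down u' j) (Defs.down u i)) =
   Bn *+ d.+1 *+ d.+1 + d.+1%:R * \sum_(k < n) a ^+ 2 ^+ k.+1 * G R k.+1 u u'.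
  transitivity (\sum_(i < d.+1) \sum_(j < d.+1) Bn + \sum_(i < d.+1) \sum_(j < d.+1) d.+1%:R *
          \sum_(k < n) a ^+ 2 ^+ k.+1 * G R k (Defs.down u' j) (Defs.down u i)).
    by rewrite -big_split; apply: eq_bigr => i _; rewrite -big_split.
  rewrite !sumr_const !card_ord; congr (_ + _).
under eq_bigr => i _ do rewrite -mulr_sumr.
  rewrite -mulr_sumr; congr (_ * _).
  under eq_bigr => i _ do rewrite exchange_big /=.
  rewrite exchange_big /=; apply: eq_bigr => k _.
  rewrite /= mulr_sumr; apply: eq_bigr => i _; rewrite mulr_sumr.
  by apply: eq_bigr => j _; rewrite G_sym.
rewrite S1 sumr_const card_ord big_ord_recl /= /Bn.
under [X in _ = _ + _ * (_ + X)]eq_bigr => k _ do rewrite /bump /= add1n add0n exprS -mulrA.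
rewrite -mulr_sumr /a.
set Sg := \sum_(k < n) _.
rewrite [(_ ^+ 2) ^+ n.+1]exprS expr1; set Bn2 := (_ ^+ 2) ^+ n.
ring.
Qed.

Lemma G_ge0 (R : realType) d k (u u' : pt d) : 0 <= G R k u u'.
Proof.
elim: k u u' => [|k IH] u u' /=; first by rewrite ler0n.
by apply: sumr_ge0 => i _; apply: sumr_ge0 => j _.
Qed.

Lemma G_le (R : realType) d k (u u' : pt d) : G R k u u' <= (d.+1%:R ^+ 2) ^+ k.
Proof.
elim: k u u' => [|k IH] u u' /=; first by rewrite expr0; case: (u == u').
rewrite exprS expr2 -mulrA.
have -> : d.+1%:R * (d.+1%:R * (d.+1%:R ^+ 2) ^+ k) =
   \sum_(i < d.+1) \sum_(j < d.+1) (d.+1%:R ^+ 2) ^+ k :> R.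
  by rewrite !sumr_const !card_ord; ring.
by apply: ler_sum => i _; apply: ler_sum => j _.
Qed.

Definition shift d (y u : pt d) : pt d := [ffun i => u i + y i].

Lemma shift_inj d (y : pt d) : injective (shift y).
Proof.
move=> u v /ffunP h; apply/ffunP => i; move: (h i); rewrite !ffunE.
by move/addIr.
Qed.

Lemma down_shift d (y u : pt d) i : Defs.down (shift y u) i = shift y (Defs.down u i).
Proof. by apply/ffunP => j; rewrite !ffunE; ring. Qed.

Lemma G_shift (R : realType) d k (y u u' : pt d) :
  G R k (shift y u) (shift y u') = G R k u u'.
Proof.
elim: k u u' => [|k IH] u u' /=; first by rewrite (inj_eq (@shift_inj d y)).
by apply: eq_bigr => i _; apply: eq_bigr => j _; rewrite !down_shift IH.
Qed.

Lemma G_diag (R : realType) d k (u v : pt d) : G R k u u = G R k v v.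
Proof.
have -> : v = shift (shift (- u) v) u.
  by apply/ffunP => i; rewrite !ffunE; ring.
by rewrite G_shift.
Qed.

Lemma G_psd (R : realType) d k (I : finType) (p : I -> pt d) (c : I -> R) :
  0 <= \sum_a \sum_b c a * c b * G R k (p a) (p b).
Proof.
elim: k I p c => [|k IH] I p c /=.
  set s := undup [seq p a | a <- enum I].
  have us : uniq s by apply: undup_uniq.
  have ins : forall a, p a \in s.
    by move=> a; rewrite mem_undup; apply/mapP; exists a; rewrite ?mem_enum.
  have E : forall a b, (p a == p b)%:R = \sum_(w <- s) (p a == w)%:R * (p b == w)%:R :> R.
    move=> a b; rewrite (bigD1_seq (p a)) //= eqxx mul1r big1 ?addr0 //.
      by rewrite eq_sym.
    by move=> w /negbTE hw; rewrite eq_sym hw mul0r.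
  have -> : \sum_a \sum_b c a * c b * (p a == p b)%:R =
      \sum_(w <- s) (\sum_a c a * (p a == w)%:R) ^+ 2.
    symmetry; under eq_bigr do rewrite expr2 mulr_suml.
    rewrite exchange_big /=; apply: eq_bigr => a _.
    under eq_bigr do rewrite mulr_sumr.
    rewrite exchange_big /=; apply: eq_bigr => b _.
    by rewrite E mulr_sumr; apply: eq_bigr => w _; ring.
  by apply: sumr_ge0 => w _; apply: sqr_ge0.
have := IH (I * 'I_d.+1)%type (fun x => Defs.down (p x.1) x.2) (fun x => c x.1).
rewrite -(pair_bigA _ (fun a i => \sum_(y : I * 'I_d.+1)
   c a * c y.1 * G R k (Defs.down (p a) i) (Defs.down (p y.1) y.2))) /=.
under eq_bigr => a _ do under eq_bigr => i _ do
  rewrite -(pair_bigA _ (fun b j => c a * c b * G R k (Defs.down (p a) i) (Defs.down (p b) j))) /=.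
move/le_trans; apply; rewrite le_eqVlt; apply/orP; left; apply/eqP.
apply: eq_bigr => a _; rewrite exchange_big /=; apply: eq_bigr => b _.
rewrite mulr_sumr; apply: eq_bigr => i _; rewrite mulr_sumr; apply: eq_bigr => j _.
by [].
Qed.

Lemma G_le_diag (R : realType) d k (u u' : pt d) : G R k u u' <= G R k u u.
Proof.
have := G_psd k (fun b : bool => if b then u else u') (fun b : bool => if b then 1 else -1 : R).
rewrite !big_bool /= (G_diag _ _ u' u) (G_sym _ _ u' u).
lra.
Qed.

Lemma G_tri (R : realType) d k (u v w : pt d) :
  G R k u u - G R k u w <= 2 * (G R k u u - G R k u v) + 2 * (G R k u u - G R k v w).
Proof.
have := G_psd k (fun b : 'I_3 => if val b == 0%N then u else if val b == 1%N then v else w)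
  (fun b : 'I_3 => if val b == 0%N then 1 else if val b == 1%N then -2 else 1 : R).
rewrite !big_ord_recl !big_ord0 /=.
rewrite (G_diag _ _ v u) (G_diag _ _ w u) (G_sym _ _ v u) (G_sym _ _ w u) (G_sym _ _ w v).
lra.
Qed.

Definition Eg (R : realType) d (A : R) (K : nat) (u u' : pt d) : R :=
  \sum_(k < K) A ^+ k.+1 * (G R k u u - G R k u u').

Lemma Eg_ge0 (R : realType) d (A : R) K (u u' : pt d) : 0 <= A -> 0 <= Eg A K u u'.
Proof.
move=> A0; apply: sumr_ge0 => k _; apply: mulr_ge0; first exact: exprn_ge0.
by rewrite subr_ge0 G_le_diag.
Qed.

Lemma Eg_tri (R : realType) d (A : R) K (u v w : pt d) : 0 <= A ->
  Eg A K u w <= 2 * Eg A K u v + 2 * Eg A K v w.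
Proof.
move=> A0; rewrite /Eg !mulr_sumr -big_split /=; apply: ler_sum => k _.
have := G_tri R k u v w; rewrite (G_diag _ _ v u).
have : 0 <= A ^+ k.+1 by exact: exprn_ge0.
set x := A ^+ k.+1; move=> hx h.
nra.
Qed.

Lemma Eg_refl (R : realType) d (A : R) K (u : pt d) : Eg A K u u = 0.
Proof. by rewrite /Eg big1 // => k _; rewrite subrr mulr0. Qed.

Definition ev d (i : 'I_d.+1) : pt d := [ffun l => (l == i)%:Z].
Definition step d (u : pt d) i j : pt d := shift (ev i) (Defs.down u j).

Lemma stepE d (u : pt d) i j l : step u i j l = u l - (l == j)%:Z + (l == i)%:Z.
Proof. by rewrite /step /shift /ev /Defs.down !ffunE. Qed.

Lemma G_step (R : realType) d k (u : pt d) i j :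
  G R k (Defs.down u i) (Defs.down u j) = G R k u (step u i j).
Proof.
rewrite -(G_shift _ _ (ev i)); congr (G R k _ _).
by apply/ffunP => l; rewrite /shift /ev /Defs.down !ffunE; ring.
Qed.

Lemma sum2B (R : ringType) n (F : 'I_n -> 'I_n -> R) c :
  \sum_(i < n) \sum_(j < n) (c - F i j) = c *+ n *+ n - \sum_(i < n) \sum_(j < n) F i j.
Proof.
transitivity (\sum_(i < n) (c *+ n - \sum_(j < n) F i j)).
  by apply: eq_bigr => i _; rewrite sumrB sumr_const card_ord.
by rewrite sumrB sumr_const card_ord.
Qed.

Lemma le_sum1 (R : realType) (I : finType) (F : I -> R) i :
  (forall j, 0 <= F j) -> F i <= \sum_j F j.
Proof.
by move=> h; rewrite (bigD1 i) //= lerDl; apply: sumr_ge0 => j _.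
Qed.

Lemma Eg_step (R : realType) d (A : R) K (u : pt d) i j :
  0 <= A -> A * (d.+1%:R ^+ 2) = 1 -> Eg A K u (step u i j) <= 1.
Proof.
move=> A0 hA.
set f := fun k => A ^+ k * G R k u u.
have T : forall k, A ^+ k.+1 * \sum_(i' < d.+1) \sum_(j' < d.+1)
    (G R k u u - G R k u (step u i' j')) = f k - f k.+1.
  move=> k; rewrite /f [G R k.+1 u u]/=.
  under [X in _ = _ - _ * X]eq_bigr do under eq_bigr do rewrite G_step.
  rewrite sum2B.
  set M := \sum_(i0 < d.+1) _.
  rewrite exprS.
  have -> : A ^+ k * G R k u u = A ^+ k * G R k u u * (A * d.+1%:R ^+ 2) by rewrite hA mulr1.
  rewrite /M; ring.
have S : \sum_(k < K) A ^+ k.+1 * \sum_(i' < d.+1) \sum_(j' < d.+1)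
    (G R k u u - G R k u (step u i' j')) = f 0%N - f K.
  under eq_bigr do rewrite T.
  rewrite -(big_mkord xpredT (fun k => f k - f k.+1)).
  rewrite -[LHS]opprK -sumrN; under eq_bigr do rewrite opprB.
  by rewrite telescope_sumr // opprB.
apply: (@le_trans _ _ (f 0%N - f K)).
  rewrite -S; apply: ler_sum => k _; apply: ler_wpM2l; first exact: exprn_ge0.
  apply: (@le_trans _ _ (\sum_(j' < d.+1) (G R k u u - G R k u (step u i j')))).
    rewrite (bigD1 j) //= lerDl; apply: sumr_ge0 => j' _.
    by rewrite subr_ge0 G_le_diag.
  rewrite [in X in _ <= X](bigD1 i) //= lerDl; apply: sumr_ge0 => i' _.
  by apply: sumr_ge0 => j' _; rewrite subr_ge0 G_le_diag.
rewrite /f /= eqxx expr0 mul1r lerBlDr lerDl.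
by apply: mulr_ge0; [exact: exprn_ge0 | exact: G_ge0].
Qed.

Definition l1 d (u u' : pt d) : int := \sum_(l < d.+1) `|u' l - u l|.

Lemma sum_eq1 d (i : 'I_d.+1) : \sum_(l < d.+1) (l == i)%:Z = 1.
Proof. by rewrite (bigD1 i) //= eqxx big1 ?addr0 // => j /negbTE ->. Qed.

Lemma rank_step d (u : pt d) i j : rank (step u i j) = rank u.
Proof.
rewrite /rank; under eq_bigr do rewrite stepE.
by rewrite big_split /= sumrB !sum_eq1 subrK.
Qed.

Lemma pos_neg d (u u' : pt d) : rank u = rank u' -> u != u' ->
  exists i j, u i < u' i /\ u' j < u j.
Proof.
move=> hr neq.
have hs : \sum_(l < d.+1) (u' l - u l) = 0 by rewrite sumrB -/(rank u') -/(rank u) hr subrr.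
have [i hi] : exists i, u i < u' i.
  apply/existsP; apply: contraR neq => /existsPn h.
  apply/eqP/ffunP => l; apply/eqP; rewrite eq_le; apply/andP; split; last first.
    by rewrite leNgt; apply: h.
  have h0 : forall l, 0 <= u l - u' l by move=> l'; rewrite subr_ge0 leNgt h.
  have hs' : \sum_(l < d.+1) (u l - u' l) = 0.
    by rewrite -[LHS]opprK -sumrN; under eq_bigr do rewrite opprB; rewrite hs oppr0.
  have := psumr_eq0P (fun l _ => h0 l) hs' (isT : xpredT l).
  by move=> e; rewrite -subr_le0 e.
have [j hj] : exists j, u' j < u j.
  apply/existsP; apply: contraR neq => /existsPn h.
  apply/eqP/ffunP => l; apply/eqP; rewrite eq_le; apply/andP; split.
    by rewrite leNgt; apply: h.
  have h0 : forall l, 0 <= u' l - u l by move=> l'; rewrite subr_ge0 leNgt h.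
  have := psumr_eq0P (fun l _ => h0 l) hs (isT : xpredT l).
  by move=> e; rewrite -subr_le0 e.
by exists i, j.
Qed.

Lemma l1_step d (u u' : pt d) i j : u i < u' i -> u' j < u j ->
  l1 (step u i j) u' + 2 = l1 u u'.
Proof.
move=> hi hj.
have nij : j != i by apply/eqP => eij; move: hj; rewrite eij => /(lt_trans hi); rewrite ltxx.
rewrite /l1 (bigD1 i) //= [in RHS](bigD1 i) //= (bigD1 j) //= [in RHS](bigD1 j) //=.
rewrite !stepE eqxx (negbTE nij) [i == j]eq_sym (negbTE nij).
have -> : \sum_(l < d.+1 | (l != i) && (l != j)) `|u' l - step u i j l| =
          \sum_(l < d.+1 | (l != i) && (l != j)) `|u' l - u l|.
  apply: eq_bigr => l /andP[li lj]; rewrite stepE (negbTE li) (negbTE lj).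
  by rewrite subr0 addr0.
set S := \sum_(l < d.+1 | _) _.
have h1 : `|u' i - (u i - 0 + 1)| = `|u' i - u i| - 1.
  rewrite !ger0_norm; [lia | lia | lia].
have h2 : `|u' j - (u j - 1 + 0)| = `|u' j - u j| - 1.
  rewrite !ler0_norm; [lia | lia | lia].
rewrite h1 eqxx h2; lia.
Qed.

Lemma l1_ge0 d (u u' : pt d) : 0 <= l1 u u'.
Proof. by apply: sumr_ge0 => l _; apply: normr_ge0. Qed.

Lemma Eg_chain (R : realType) d (A : R) K : 0 <= A -> A * (d.+1%:R ^+ 2) = 1 ->
  forall n (u u' : pt d), rank u = rank u' -> l1 u u' <= 2 * n%:Z -> Eg A K u u' <= 4 ^+ n.
Proof.
move=> A0 hA; elim=> [|n IH] u u' hr hl.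
  case: (eqVneq u u') => [<-|neq]; first by rewrite Eg_refl expr0.
  have [i [j [hi hj]]] := pos_neg hr neq.
  have := l1_step hi hj; have := l1_ge0 (step u i j) u'; lia.
case: (eqVneq u u') => [<-|neq]; first by rewrite Eg_refl exprn_ge0.
have [i [j [hi hj]]] := pos_neg hr neq.
have e := l1_step hi hj.
have h1 := Eg_step K u i j A0 hA.
have h2 : Eg A K (step u i j) u' <= 4 ^+ n.
  by apply: IH; [rewrite rank_step | move: hl; rewrite -e; lia].
have h3 := Eg_tri K u (step u i j) u' A0.
have h4 : 1 <= (4 : R) ^+ n by apply: exprn_ege1; lra.
rewrite exprS; lra.
Qed.

Local Open Scope classical_set_scope.

Lemma cvg0_nat (R : realType) (f : nat -> R) :
  (f @ \oo --> 0) <-> (forall e, 0 < e -> exists T, forall t, (T <= t)%N -> `|f t| < e).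
Proof.
rewrite cvgr0Pnorm_lt; split => h e he.
  have [T _ hT] := h e he; by exists T => t ht; apply: hT.
have [T hT] := h e he; by exists T.
Qed.

Lemma geo_small (R : realType) (b : R) : 0 <= b < 1 ->
  forall e, 0 < e -> exists T, forall t, (T <= t)%N -> b ^+ t < e.
Proof.
move=> /andP[b0 b1] e he.
have := cvg_expr (z := b); rewrite ger0_norm // => /(_ b1).
move/cvg0_nat => /(_ e he) [T hT]; exists T => t ht.
by have := hT t ht; rewrite ger0_norm // exprn_ge0.
Qed.

Definition pw d N (x : pt d) (o : {ffun 'I_d.+1 -> 'I_N}) : pt d :=
  [ffun i => x i + (o i : nat)%:Z].

Lemma pw_inj d N (x : pt d) : injective (@pw d N x).
Proof.
move=> o o' /ffunP h; apply/ffunP => i; apply: val_inj => /=.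
by move: (h i); rewrite !ffunE => /addrI [].
Qed.

Lemma window_pw d N (x u : pt d) : inWindow N x u -> exists o, u = @pw d N x o.
Proof.
move=> [_ hw].
have hb : forall i, (`|u i - x i|%N < N)%N.
  move=> i; have /andP[h1 h2] := hw i.
  have : 0 <= u i - x i by rewrite subr_ge0.
  move: h2; rewrite -ltrBlDl => h2 h0.
  rewrite -ltz_nat gez0_abs //.
exists [ffun i => Ordinal (hb i)]; apply/ffunP => i; rewrite !ffunE /=.
have /andP[h1 _] := hw i.
rewrite gez0_abs ?subr_ge0 //; ring.
Qed.

Lemma mem_layer d t (u : pt d) : (u \in layer t) = (rank u == t%:Z).
Proof.
apply/idP/eqP => [/set_mem //|h]; exact: mem_set.
Qed.

Lemma zeta_repr (R : realType) d (alpha : nat -> R) (c : pt d -> R) N (x : pt d) t :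
  (forall u, layer t u -> ~ inWindow N x u -> c u = 0) ->
  zeta alpha c t = fun s => \sum_(o : {ffun 'I_d.+1 -> 'I_N})
    (if rank (pw x o) == t%:Z then c (pw x o) else 0) * Xn alpha t (pw x o) s.
Proof.
move=> hc; apply/funext => s; rewrite /zeta fsbig_mkcond.
rewrite (@fsumT_seq R _ [seq pw x o | o <- enum {ffun 'I_d.+1 -> 'I_N}]).
- rewrite big_map big_enum /=; apply: eq_bigr => o _.
  rewrite /patch mem_layer; case: eqP => h; last by rewrite mul0r.
  by rewrite /Xv h.
- by rewrite map_inj_uniq ?enum_uniq //; apply: pw_inj.
- move=> u hu; rewrite /patch; case: ifP => // hl.
  rewrite hc ?mul0r //; first by apply: set_mem.
  move=> hw; have [w ew] := window_pw hw; move/negP: hu; apply; rewrite ew.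
  by apply: map_f; rewrite mem_enum.
Qed.

Lemma cov_sum_l (R : realType) d (J : finType) (g : J -> R) (f : J -> src d -> R)
    (h : src d -> R) (r : seq (src d)) :
  uniq r -> (forall o s, s \notin r -> f o s = 0) ->
  cov (fun s => \sum_o g o * f o s) h = \sum_o g o * cov (f o) h.
Proof.
move=> ur hr; rewrite (covE _ ur); last first.
  by move=> s hs; rewrite big1 // => o _; rewrite hr ?mulr0.
transitivity (\sum_o \sum_(s <- r) g o * (f o s * h s)).
  rewrite exchange_big /=; apply: eq_bigr => s _.
  by rewrite mulr_suml; apply: eq_bigr => o _; rewrite mulrA.
by apply: eq_bigr => o _; rewrite (covE _ ur (hr o)) mulr_sumr.
Qed.

Definition zr (R : realType) d (alpha : nat -> R) (J : finType) (g : J -> R) (q : J -> pt d) t :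
  src d -> R := fun s => \sum_o g o * Xn alpha t (q o) s.

Lemma zr_supp d (J : finType) (q : J -> pt d) t :
  let r := undup (flatten [seq suppX t (q o) | o <- enum J]) in
  uniq r /\ forall o s, s \notin r -> s \notin suppX t (q o).
Proof.
split; first exact: undup_uniq.
move=> o s; apply: contra => hs; rewrite mem_undup; apply/flatten_mapP.
by exists o; rewrite ?mem_enum.
Qed.

Lemma cov_zr_l (R : realType) d (alpha : nat -> R) (J : finType) (g : J -> R) (q : J -> pt d) t
    (h : src d -> R) :
  cov (zr alpha g q t) h = \sum_o g o * cov (Xn alpha t (q o)) h.
Proof.
have [ur hr] := zr_supp q t.
by apply: (cov_sum_l _ _ ur) => o s hs; apply: Xn_supp; apply: hr.
Qed.

Lemma cov_zr_X0 (R : realType) d (alpha : nat -> R) (J : finType) (g : J -> R) (q : J -> pt d) t :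
  cov (zr alpha g q t) (@X0 R d) = (alpha d.+1 * d.+1%:R) ^+ t * \sum_o g o.
Proof.
rewrite cov_zr_l mulr_sumr; apply: eq_bigr => o _.
by rewrite covC cov_X0 Xn_None mulrC.
Qed.

Lemma var_zr (R : realType) d (alpha : nat -> R) (J : finType) (g : J -> R) (q : J -> pt d) t :
  (forall o, g o != 0 -> rank (q o) = t%:Z) ->
  cov (zr alpha g q t) (zr alpha g q t) =
  ((alpha d.+1 * d.+1%:R) ^+ 2) ^+ t * (\sum_o g o) ^+ 2 +
  d.+1%:R * \sum_(k < t) (alpha d.+1 ^+ 2) ^+ k.+1 *
     (\sum_o \sum_o' g o * g o' * G R k (q o) (q o')).
Proof.
move=> hq.
set Bt := ((alpha d.+1 * d.+1%:R) ^+ 2) ^+ t.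
set A := alpha d.+1 ^+ 2.
rewrite cov_zr_l.
transitivity (\sum_o \sum_o' (g o * g o' * Bt + d.+1%:R * \sum_(k < t) A ^+ k.+1 *
     (g o * g o' * G R k (q o) (q o')))).
  apply: eq_bigr => o _; rewrite covC cov_zr_l mulr_sumr; apply: eq_bigr => o' _.
  have [->|go] := eqVneq (g o) 0.
    by rewrite !(mul0r, mulr0, add0r) big1 ?mulr0 // => k _; rewrite !(mul0r, mulr0).
  have [->|go'] := eqVneq (g o') 0.
    by rewrite !(mul0r, mulr0, add0r) big1 ?mulr0 // => k _; rewrite !(mul0r, mulr0).
  rewrite covC cov_Xn; last by rewrite !hq.
  rewrite mulrA mulrDr; congr (_ + _).
  rewrite mulrCA; congr (_ * _); rewrite mulr_sumr; apply: eq_bigr => k _.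
  rewrite /A; ring.
under eq_bigr do rewrite big_split /=.
rewrite big_split /=; congr (_ + _).
  rewrite expr2 mulr_suml mulr_sumr; apply: eq_bigr => o _.
  rewrite !mulr_sumr; apply: eq_bigr => o' _; ring.
under eq_bigr do rewrite -mulr_sumr.
rewrite -mulr_sumr; congr (_ * _).
transitivity (\sum_o \sum_(k < t) \sum_o' A ^+ k.+1 * (g o * g o' * G R k (q o) (q o'))).
  by apply: eq_bigr => o _; rewrite exchange_big.
rewrite exchange_big /=; apply: eq_bigr => k _.
rewrite mulr_sumr; apply: eq_bigr => o _; rewrite mulr_sumr.
by [].
Qed.

Definition Qk (R : realType) d (J : finType) (g : J -> R) (q : J -> pt d) k : R :=
  \sum_o \sum_o' g o * g o' * G R k (q o) (q o').

Lemma Qk_ge0 (R : realType) d (J : finType) (g : J -> R) (q : J -> pt d) k : 0 <= Qk g q k.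
Proof. exact: G_psd. Qed.

Lemma Qk0 (R : realType) d (J : finType) (g : J -> R) (q : J -> pt d) :
  injective q -> Qk g q 0 = \sum_o g o ^+ 2.
Proof.
move=> iq; rewrite /Qk; apply: eq_bigr => o _ /=.
rewrite (bigD1 o) //= eqxx mulr1 big1 ?addr0 ?expr2 // => o' /negbTE no.
by rewrite (inj_eq iq) eq_sym no mulr0.
Qed.

Lemma CSineq (R : realType) (J : finType) (g : J -> R) :
  (\sum_o g o) ^+ 2 <= #|J|%:R * \sum_o g o ^+ 2.
Proof.
have h0 : 0 <= \sum_o \sum_o' (g o - g o') ^+ 2.
  by apply: sumr_ge0 => o _; apply: sumr_ge0 => o' _; apply: sqr_ge0.
have e : \sum_o \sum_o' (g o - g o') ^+ 2 =
    2 * (#|J|%:R * \sum_o g o ^+ 2) - 2 * (\sum_o g o) ^+ 2.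
  transitivity (\sum_o \sum_o' (g o ^+ 2 + g o' ^+ 2 - 2 * (g o * g o'))).
    by apply: eq_bigr => o _; apply: eq_bigr => o' _; ring.
  transitivity (\sum_o (g o ^+ 2 *+ #|J| + \sum_o' g o' ^+ 2 - 2 * (g o * \sum_o' g o'))).
    apply: eq_bigr => o _; rewrite sumrB big_split /= sumr_const; congr (_ - _).
    by rewrite !mulr_sumr.
  rewrite sumrB big_split /= sumrMnl sumr_const.
  rewrite -mulr_sumr -mulr_suml.
  rewrite -mulr_natr; ring.
lra.
Qed.

Lemma PQ0 (R : realType) d (J : finType) (g : J -> R) (q : J -> pt d) t (A : R) :
  (0 < t)%N -> 0 <= A -> A * Qk g q 0 <= \sum_(k < t) A ^+ k.+1 * Qk g q k.
Proof.
case: t => [//|t] _ A0; rewrite big_ord_recl /= expr1 lerDl.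
by apply: sumr_ge0 => k _; apply: mulr_ge0; [exact: exprn_ge0 | exact: Qk_ge0].
Qed.

Lemma l1_pw d N (x : pt d) (o o' : {ffun 'I_d.+1 -> 'I_N}) :
  l1 (pw x o) (pw x o') <= 2 * (d.+1 * N)%N%:Z.
Proof.
apply: (@le_trans _ _ (\sum_(l < d.+1) (N%:Z))).
  apply: ler_sum => l _; rewrite /pw !ffunE.
  have h1 := ltn_ord (o l); have h2 := ltn_ord (o' l).
  rewrite ler_norml; apply/andP; split; lia.
rewrite sumr_const card_ord; lia.
Qed.

Lemma term_bound (R : realType) d N (x : pt d) (g : {ffun 'I_d.+1 -> 'I_N} -> R) t (A : R) o o' :
  0 <= A -> A * (d.+1%:R ^+ 2) = 1 ->
  (forall o, g o != 0 -> rank (pw x o) = t%:Z) ->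
  g o * g o' * Eg A t (pw x o) (pw x o') <= (g o ^+ 2 + g o' ^+ 2) * 4 ^+ (d.+1 * N).
Proof.
move=> A0 hA hq.
have D0 : 0 <= (4 : R) ^+ (d.+1 * N) by apply: exprn_ge0.
have [->|go] := eqVneq (g o) 0.
  by rewrite !mul0r; apply: mulr_ge0 => //; apply: addr_ge0; apply: sqr_ge0.
have [->|go'] := eqVneq (g o') 0.
  by rewrite mulr0 mul0r; apply: mulr_ge0 => //; apply: addr_ge0; apply: sqr_ge0.
have hE0 := Eg_ge0 t (pw x o) (pw x o') A0.
have hE1 : Eg A t (pw x o) (pw x o') <= 4 ^+ (d.+1 * N).
  apply: Eg_chain => //; first by rewrite !hq.
  exact: l1_pw.
set E := Eg A t _ _ in hE0 hE1 *; set D := 4 ^+ _ in D0 hE1 *.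
set a := g o in go *; set b := g o' in go' *.
have h1 : 0 <= (a ^+ 2 + b ^+ 2) * (D - E).
  by apply: mulr_ge0; [apply: addr_ge0; apply: sqr_ge0 | rewrite subr_ge0].
have h2 : 0 <= (a - b) ^+ 2 * E by apply: mulr_ge0 => //; apply: sqr_ge0.
have h3 : 0 <= (a ^+ 2 + b ^+ 2) * E by apply: mulr_ge0 => //; apply: addr_ge0; apply: sqr_ge0.
nra.
Qed.

Lemma key_b1 (R : realType) d N (x : pt d) (g : {ffun 'I_d.+1 -> 'I_N} -> R) t (A : R) (v : pt d) :
  0 < A -> A * (d.+1%:R ^+ 2) = 1 -> (0 < t)%N ->
  (forall o, g o != 0 -> rank (pw x o) = t%:Z) ->
  (\sum_o g o) ^+ 2 * (\sum_(k < t) A ^+ k.+1 * G R k v v) <=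
  (1 + 2 * 4 ^+ (d.+1 * N) * #|{ffun 'I_d.+1 -> 'I_N}|%:R / A) *
    \sum_(k < t) A ^+ k.+1 * Qk g (pw x) k.
Proof.
move=> A0 hA t0 hq.
set S := \sum_o g o.
set P := \sum_(k < t) A ^+ k.+1 * Qk g (pw x) k.
set D := (4 : R) ^+ _.
set n := #|{ffun 'I_d.+1 -> 'I_N}|.
have step1 : forall k, S ^+ 2 * G R k v v - Qk g (pw x) k =
    \sum_o \sum_o' g o * g o' * (G R k v v - G R k (pw x o) (pw x o')).
  move=> k.
  transitivity (\sum_o \sum_o' g o * g o' * G R k v v - Qk g (pw x) k).
    congr (_ - _); rewrite expr2 mulr_suml mulr_suml; apply: eq_bigr => o _.
    by rewrite mulr_sumr mulr_suml; apply: eq_bigr => o' _; ring.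
  rewrite /Qk -sumrB; apply: eq_bigr => o _; rewrite -sumrB.
  by apply: eq_bigr => o' _; ring.
have step2 : S ^+ 2 * (\sum_(k < t) A ^+ k.+1 * G R k v v) - P =
    \sum_o \sum_o' g o * g o' * Eg A t (pw x o) (pw x o').
  transitivity (\sum_(k < t) A ^+ k.+1 * (S ^+ 2 * G R k v v - Qk g (pw x) k)).
    by rewrite /P mulr_sumr -sumrB; apply: eq_bigr => k _; move: (A ^+ k.+1) => Ak; ring.
  under eq_bigr do rewrite step1.
  transitivity (\sum_(k < t) \sum_o \sum_o' A ^+ k.+1 *
      (g o * g o' * (G R k v v - G R k (pw x o) (pw x o')))).
    apply: eq_bigr => k _; rewrite mulr_sumr; apply: eq_bigr => o _.
    by rewrite mulr_sumr.
  rewrite exchange_big /=; apply: eq_bigr => o _.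
  rewrite exchange_big /=; apply: eq_bigr => o' _.
  rewrite /Eg mulr_sumr; apply: eq_bigr => k _.
  rewrite (G_diag _ _ (pw x o) v); move: (A ^+ k.+1) => Ak; ring.
have step3 : \sum_o \sum_o' g o * g o' * Eg A t (pw x o) (pw x o') <=
    \sum_o \sum_o' (g o ^+ 2 + g o' ^+ 2) * D.
  apply: ler_sum => o _; apply: ler_sum => o' _.
  by apply: term_bound => //; apply: ltW.
have step4 : \sum_o \sum_o' (g o ^+ 2 + g o' ^+ 2) * D =
    2 * D * n%:R * \sum_o g o ^+ 2.
  transitivity (\sum_o (g o ^+ 2 *+ n + \sum_o' g o' ^+ 2) * D).
    apply: eq_bigr => o _; rewrite -mulr_suml big_split /= sumr_const //.
  rewrite -mulr_suml big_split /= sumrMnl sumr_const -/n.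
  rewrite -mulr_natr; ring.
have step5 : A * \sum_o g o ^+ 2 <= P.
  rewrite -(Qk0 g (@pw_inj d N x)); apply: PQ0 => //; exact: ltW.
set Y := \sum_o g o ^+ 2 in step4 step5 *.
have hY : Y <= P / A by rewrite ler_pdivlMr // mulrC.
have D0 : 0 <= 2 * D * n%:R.
  by apply: mulr_ge0; [apply: mulr_ge0 => //; apply: exprn_ge0 | apply: ler0n].
have -> : (1 + 2 * D * n%:R / A) * P = P + 2 * D * n%:R * (P / A) by ring.
set M := \sum_(k < t) A ^+ k.+1 * G R k v v in step2 *.
nra.
Qed.

Definition vt d (t : nat) : pt d := [ffun i => if i == ord0 then t%:Z else 0].

Lemma rank_vt d t : rank (@vt d t) = t%:Z.
Proof.
rewrite /rank (bigD1 ord0) //= ffunE eqxx big1 ?addr0 // => i /negbTE hi.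
by rewrite ffunE hi.
Qed.

Definition c1 (R : realType) d (u : pt d) : R := if u == vt d `|rank u|%N then 1 else 0.

Lemma c1_window (R : realType) d t (u : pt d) :
  layer t u -> ~ inWindow 1 (vt d t) u -> c1 R u = 0.
Proof.
move=> hl hw; rewrite /c1; case: eqP => // e; exfalso; apply: hw.
have ht : `|rank u|%N = t by rewrite hl.
rewrite ht in e; rewrite e; split; first by rewrite /inHS rank_vt.
by move=> i; rewrite lexx /= ltrDl.
Qed.

Lemma zeta_c1 (R : realType) d (alpha : nat -> R) t :
  zeta alpha (@c1 R d) t = Xn alpha t (vt d t).
Proof.
apply/funext => s; rewrite /zeta fsbig_mkcond.
rewrite (@fsumT_seq R _ [:: vt d t]) // ?big_seq1.
  rewrite /patch mem_layer rank_vt eqxx /c1 rank_vt eqxx mul1r /Xv rank_vt //.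
move=> u; rewrite inE => hu; rewrite /patch mem_layer; case: eqP => // hr.
by rewrite /c1 hr /= (negbTE hu) mul0r.
Qed.

Lemma var_X0 (R : realType) d : var (@X0 R d) = 1.
Proof. by rewrite /var cov_X0. Qed.

Lemma corr_sq (R : realType) d (f : src d -> R) :
  0 < var f -> corr f (@X0 R d) ^+ 2 = cov f (@X0 R d) ^+ 2 / var f.
Proof.
move=> hv; rewrite /corr var_X0 mulr1 expr_div_n sqr_sqrtr //; exact: ltW.
Qed.

Lemma abs_lt_sq (R : realType) (x e : R) : 0 < e -> x ^+ 2 < e ^+ 2 -> `|x| < e.
Proof.
move=> he hx; case: (ger0P x) => h; nra.
Qed.

Lemma geom_bound (R : realType) (B : R) t : 1 <= B ->
  (B - 1) * \sum_(k < t) B ^+ k <= B ^+ t.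
Proof.
move=> hB; elim: t => [|t IH]; first by rewrite big_ord0 mulr0 expr0.
rewrite big_ord_recr /= mulrDr exprS.
have : 0 <= B ^+ t by apply: exprn_ge0; lra.
move: IH; set x := _ * _; set y := B ^+ t; nra.
Qed.

Local Close Scope classical_set_scope.
Unset Implicit Arguments.

Theorem mainTheorem5 (R : realType) (d : nat) (alpha : nat -> R) :
  0 < alpha d.+1 ->
  (local_reconstruction d alpha <-> single_vertex_reconstruction d alpha).
Proof.
move=> ha; split; last by move=> h; exists 1%N.
move=> [N [W [c [hc [hv hcr]]]]].
pose A := alpha d.+1 ^+ 2.
pose B := (alpha d.+1 * d.+1%:R) ^+ 2.
have A0 : 0 < A by exact: exprn_gt0.
have B0 : 0 < B by apply: exprn_gt0; apply: mulr_gt0 => //; rewrite ltr0n.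
have hBA : B = A * d.+1%:R ^+ 2 by rewrite /B /A exprMn.
pose g t := fun o : {ffun 'I_d.+1 -> 'I_N} =>
  if rank (pw (W t) o) == t%:Z then c (pw (W t) o) else 0.
have hq : forall t o, g t o != 0 -> rank (pw (W t) o) = t%:Z.
  move=> t o; rewrite /g; case: ifP => [/eqP e _ | _]; first exact: e.
  by rewrite eqxx.
have hz : forall t, zeta alpha c t = zr alpha (g t) (pw (W t)) t.
  by move=> t'; exact: (zeta_repr alpha (hc t')).
pose S t := \sum_o g t o.
pose P t := \sum_(k < t) A ^+ k.+1 * Qk (g t) (pw (W t)) k.
have hV : forall t, var (zeta alpha c t) = B ^+ t * S t ^+ 2 + d.+1%:R * P t.
  by move=> t; rewrite /var hz var_zr //; apply: hq.
have hcsq : forall t, corr (zeta alpha c t) (@X0 R d) ^+ 2 =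
    B ^+ t * S t ^+ 2 / var (zeta alpha c t).
  move=> t; rewrite corr_sq // {1}hz cov_zr_X0 exprMn exprAC //.
pose v t := vt d t.
pose M t := \sum_(k < t) A ^+ k.+1 * G R k (v t) (v t).
have hK : forall t, var (zeta alpha (@c1 R d) t) = B ^+ t + d.+1%:R * M t.
  by move=> t; rewrite zeta_c1 /var cov_Xn.
have M0 : forall t, 0 <= M t.
  move=> t; apply: sumr_ge0 => k _; apply: mulr_ge0; [apply: exprn_ge0; exact: ltW | exact: G_ge0].
have hKpos : forall t, 0 < B ^+ t + d.+1%:R * M t.
  move=> t; apply: ltr_wpDr; last exact: exprn_gt0.
  by apply: mulr_ge0 => //; apply: ler0n.
have hc1sq : forall t, corr (zeta alpha (@c1 R d) t) (@X0 R d) ^+ 2 =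
    B ^+ t / (B ^+ t + d.+1%:R * M t).
  move=> t; rewrite corr_sq; last by rewrite hK.
  by rewrite hK zeta_c1 covC cov_X0 Xn_None exprAC.
exists (vt d), (@c1 R d); split; first by move=> t u hl hw; exact: c1_window hl hw.
split; first by move=> t; rewrite hK.
pose n := #|{ffun 'I_d.+1 -> 'I_N}|.
pose Y t := \sum_o g t o ^+ 2.
have hS2 : forall t, S t ^+ 2 <= n%:R * Y t by move=> t; exact: CSineq.
have hPY : forall t, (0 < t)%N -> A * Y t <= P t.
  move=> t t0; rewrite /Y -(Qk0 (g t) (@pw_inj d N (W t))); apply: PQ0 => //; exact: ltW.
have P0 : forall t, 0 <= P t.
  move=> t; apply: sumr_ge0 => k _; apply: mulr_ge0; [apply: exprn_ge0; exact: ltW | exact: Qk_ge0].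
have Y0 : forall t, 0 <= Y t by move=> t; apply: sumr_ge0 => o _; apply: sqr_ge0.
have d0 : 0 < d.+1%:R :> R by rewrite ltr0n.
have Vpos : forall t, 0 < B ^+ t * S t ^+ 2 + d.+1%:R * P t by move=> t; rewrite -hV.
case: (ltgtP B 1) => hB.
- (* B < 1 : local reconstruction is impossible *)
  exfalso; apply: hcr; apply/cvg0_nat => e he.
  pose C := n%:R / (d.+1%:R * A).
  have C0 : 0 <= C by apply: divr_ge0; [apply: ler0n | apply: mulr_ge0; apply: ltW].
  have hCe : C * (d.+1%:R * A) = n%:R by rewrite /C divfK // mulf_neq0 // ?lt0r_neq0.
  have e2 : 0 < e ^+ 2 / (C + 1) by apply: divr_gt0; [exact: exprn_gt0 | lra].
  have hB01 : 0 <= B < 1 by rewrite (ltW B0) hB.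
  have [T hT] := geo_small hB01 e2.
  exists (maxn T 1) => t ht; apply: abs_lt_sq => //; rewrite hcsq hV.
  have tT : (T <= t)%N by move: ht; rewrite geq_max => /andP[].
  have t1 : (0 < t)%N by move: ht; rewrite geq_max => /andP[].
  have hBt := hT t tT.
  rewrite ltr_pdivrMr ?Vpos //.
  have Bt0 : 0 <= B ^+ t by apply: exprn_ge0; exact: ltW.
  have h1 : S t ^+ 2 <= C * (B ^+ t * S t ^+ 2 + d.+1%:R * P t).
    have hp := hPY t t1; have hs := hS2 t.
    have hx : 0 <= B ^+ t * S t ^+ 2 by apply: mulr_ge0 => //; apply: sqr_ge0.
    have : n%:R * Y t <= C * (d.+1%:R * P t).
      rewrite -hCe -mulrA; apply: ler_wpM2l => //; rewrite -mulrA.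
      by apply: ler_wpM2l; [exact: ltW | exact: hp].
    move: (B ^+ t * S t ^+ 2) hx => X hx.
    have hCX : 0 <= C * X by apply: mulr_ge0.
    nra.
  have h2 : B ^+ t * C < e ^+ 2.
    have : B ^+ t * (C + 1) < e ^+ 2.
      by rewrite -ltr_pdivlMr //; lra.
    nra.
  set V := B ^+ t * S t ^+ 2 + _ in h1 *.
  have V0 : 0 < V by exact: Vpos.
  nra.
- (* B > 1 : single-vertex correlation is bounded below *)
  move/cvg0_nat => h.
  have Bm1 : 0 < B - 1 by rewrite subr_gt0.
  pose K0 := 1 + d.+1%:R * A / (B - 1).
  have K0ge : 1 <= K0.
    rewrite /K0 lerDl; apply: divr_ge0; last exact: ltW.
    by apply: mulr_ge0; [exact: ltW | exact: ltW].
  have K0pos : 0 < K0 by lra.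
  pose e := K0^-1.
  have e0 : 0 < e by rewrite invr_gt0.
  have eK : e * K0 = 1 by rewrite mulVf // lt0r_neq0.
  have e1 : e <= 1 by nra.
  have [T hT] := h e e0.
  have hTT := hT T (leqnn T).
  have hM : M T * (B - 1) <= A * B ^+ T.
    have : M T <= A * \sum_(k < T) B ^+ k.
      rewrite mulr_sumr; apply: ler_sum => k _.
      have -> : A * B ^+ k = A ^+ k.+1 * (d.+1%:R ^+ 2) ^+ k by rewrite hBA exprMn [A ^+ k.+1]exprS mulrA.
      apply: ler_wpM2l; [apply: exprn_ge0; exact: ltW | exact: G_le].
    have := geom_bound T (ltW hB).
    have : 0 <= A by exact: ltW.
    move: (\sum_(k < T) B ^+ k) => Z; nra.
  have hKv : B ^+ T + d.+1%:R * M T <= B ^+ T * K0.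
    rewrite /K0 mulrDr mulr1 lerD2l.
    rewrite -ler_pdivlMr // in hM.
    have -> : B ^+ T * (d.+1%:R * A / (B - 1)) = d.+1%:R * (A * B ^+ T / (B - 1)) by ring.
    by apply: ler_wpM2l => //; exact: ltW.
  have hq2 : e <= corr (zeta alpha (@c1 R d) T) (@X0 R d) ^+ 2.
    rewrite hc1sq ler_pdivlMr //.
    have BT : 0 < B ^+ T by exact: exprn_gt0.
    have := hKv; move: (B ^+ T + _) => Kv hK'.
    have : e * Kv <= e * (B ^+ T * K0) by apply: ler_wpM2l => //; exact: ltW.
    have -> : e * (B ^+ T * K0) = B ^+ T * (e * K0) by ring.
    by rewrite eK mulr1.
  move: hTT hq2; move: (corr _ _) => x hx hx2.
  case: (ger0P x) hx => hs hx; nra.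
-
  move/cvg0_nat => h; apply: hcr; apply/cvg0_nat => e he.
  have hA1 : A * d.+1%:R ^+ 2 = 1 by rewrite -hBA.
  pose C := 1 + 2 * 4 ^+ (d.+1 * N) * n%:R / A.
  have C1 : 1 <= C.
    rewrite /C lerDl; apply: divr_ge0; last exact: ltW.
    by apply: mulr_ge0; [apply: mulr_ge0 => //; apply: exprn_ge0 | apply: ler0n].
  pose C' := 1 + C.
  have C'0 : 0 < C' by rewrite /C'; lra.
  have eC : 0 < e / C' by apply: divr_gt0.
  have [T hT] := h (e / C') eC.
  exists (maxn T 1) => t ht; apply: abs_lt_sq => //; rewrite hcsq hV hB !expr1n !mul1r.
  have tT : (T <= t)%N by move: ht; rewrite geq_max => /andP[].
  have t1 : (0 < t)%N by move: ht; rewrite geq_max => /andP[].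
  have hk : S t ^+ 2 * M t <= C * P t := key_b1 (v t) A0 hA1 t1 (hq t).
  have hcc := hT t tT.
  have hc2 : corr (zeta alpha (@c1 R d) t) (@X0 R d) ^+ 2 < (e / C') ^+ 2.
    move: hcc; move: (corr _ _) => x hx.
    have := normr_ge0 x; case: (ger0P x) hx => hs hx; nra.
  rewrite hc1sq hB expr1n in hc2.
  set K := 1 + d.+1%:R * M t in hc2.
  have K0 : 0 < K by rewrite /K; have := M0 t; have := d0; nra.
  have hKC : C' ^+ 2 < e ^+ 2 * K.
    have KC : 0 < K * C' ^+ 2 by apply: mulr_gt0 => //; exact: exprn_gt0.
    have h1 : 1 / K * (K * C' ^+ 2) < (e / C') ^+ 2 * (K * C' ^+ 2) by rewrite ltr_pM2r.
    have E1 : 1 / K * (K * C' ^+ 2) = C' ^+ 2 by field; apply: lt0r_neq0.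
    have E2 : (e / C') ^+ 2 * (K * C' ^+ 2) = e ^+ 2 * K by field; apply: lt0r_neq0.
    by rewrite E1 E2 in h1.
  have hSK : S t ^+ 2 * K <= C' * (S t ^+ 2 + d.+1%:R * P t).
    rewrite /K /C'.
    have hp := P0 t; have hX := sqr_ge0 (S t).
    move: (S t ^+ 2) hk hX => X hk hX; move: (M t) (P t) hk hp => m p hk hp.
    have h1 : 0 <= d.+1%:R * (C * p - X * m) by apply: mulr_ge0; [exact: ltW | rewrite subr_ge0].
    have h2 : 0 <= C * X by apply: mulr_ge0 => //; lra.
    have h3 : 0 <= d.+1%:R * p by apply: mulr_ge0 => //; exact: ltW.
    nra.
  rewrite ltr_pdivrMr; last by have := Vpos t; rewrite hB expr1n mul1r.
  set V := S t ^+ 2 + _ in hSK *.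
  have V0 : 0 < V by have := Vpos t; rewrite hB expr1n mul1r.
  have S0 := sqr_ge0 (S t).
  move: (S t ^+ 2) S0 hSK => X S0 hSK.
  have e20 : 0 < e ^+ 2 by exact: exprn_gt0.
  have hC' : 1 < C' by rewrite /C'; lra.
  have a1 : X * C' ^+ 2 <= X * (e ^+ 2 * K) by apply: ler_wpM2l => //; exact: ltW.
  have a3 : e ^+ 2 * (X * K) <= e ^+ 2 * (C' * V) by apply: ler_wpM2l => //; exact: ltW.
  have a4 : C' * (X * C') <= C' * (e ^+ 2 * V).
    have -> : C' * (X * C') = X * C' ^+ 2 by ring.
    have -> : C' * (e ^+ 2 * V) = e ^+ 2 * (C' * V) by ring.
    have a2 : X * (e ^+ 2 * K) = e ^+ 2 * (X * K) by ring.
    rewrite a2 in a1.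
    exact: le_trans a1 a3.
  rewrite ler_pM2l // in a4.
  have eV : 0 < e ^+ 2 * V by apply: mulr_gt0.
  case: (ltrgt0P X) S0 => hX S0 //.
  - have : X < X * C' by rewrite ltr_pMr.
    move=> h5; exact: lt_le_trans h5 a4.
  - by rewrite hX.
Qed.
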